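(* Let $\varphi\in\Xi_p$ be such that $\lim_{x\to0}\frac{\sqrt x}{\varphi(x)}=0$. Then for every $n\in\mathbb{N}$ the map \[ \Upsilon_n:\big(C_0([0,1],G(\mathbb{R}^d)),d_\infty\big)\to\big(C_0([0,1],G(\mathbb{R}^d)),d_\varphi\big) \] is continuous.
   Context: Fix $d\geq2$, $p\in(2,3)$. $G(\mathbb{R}^d)$ is the set of $g=(g^1,g^2)\in\mathbb{R}^d\oplus(\mathbb{R}^d\otimes\mathbb{R}^d)$ whose symmetric part of $g^2$ is $\frac12g^1\otimes g^1$, with product $g\otimes h=(g^1+h^1,g^2+g^1\otimes h^1+h^2)$, identity $(0,0)=:\exp(0)$, inverse $(g^1,g^2)^{-1}=(-g^1,-g^2+g^1\otimes g^1)$; $\exp(a^1,a^2)=(a^1,a^2+\frac12a^1\otimes a^1)$ for antisymmetric $a^2$, $\exp(x):=\exp(x,0)$; dilation $\delta_\lambda\exp(a^1,a^2)=\exp(\lambda a^1,\lambda^2a^2)$; $\|g\|=\inf\{\sum_i|x^i|:x^i\in\mathbb{R}^d,\exp(x^1)\otimes\cdots\otimes\exp(x^k)=g\}$. $C_0([0,1],G(\mathbb{R}^d))$: continuous paths with $\mathbf{x}_0=\exp(0)$; $\mathbf{x}_{s,t}=\mathbf{x}_s^{-1}\otimes\mathbf{x}_t$; $d_\infty(\mathbf{x},\mathbf{y})=\sup_{0\leq s<t\leq1}\|\mathbf{x}_{s,t}^{-1}\otimes\mathbf{y}_{s,t}\|$ and $d_\varphi(\mathbf{x},\mathbf{y})=\sup_{0\leq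 s<t\leq1}\|\mathbf{x}_{s,t}^{-1}\otimes\mathbf{y}_{s,t}\|/\varphi(t-s)$. $\Xi_p$: $\varphi:[0,1]\to[0,\infty)$ with $\varphi(0)=0$ and $\varphi^p$ strictly increasing and convex. $\Upsilon_n(\mathbf{x})$ is the path with $\Upsilon_n(\mathbf{x})_{k/2^n}=\mathbf{x}_{k/2^n}$ for $k=0,\dots,2^n$ and $\Upsilon_n(\mathbf{x})_{k/2^n,\,k/2^n+t}=\delta_{2^nt}(\mathbf{x}_{k/2^n,(k+1)/2^n})$ for $t\in[0,2^{-n}]$, $k=0,\dots,2^n-1$. *)

(* Defs.v *)
From HB Require Import structures.
From mathcomp Require Import all_boot all_order all_algebra.
From mathcomp Require Import all_classical all_reals all_analysis.
Set Implicit Arguments. Unset Strict Implicit. Unset Printing Implicit Defensive.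
Import Order.TTheory GRing.Theory Num.Theory.
Import numFieldNormedType.Exports.
Local Open Scope classical_set_scope.
Local Open Scope ring_scope.

Section Carnot.
Variables (R : realType) (d : nat).

(* ambient space R^d (+) (R^d (x) R^d); R^d as row vectors, tensors as d x d matrices *)
Definition T2 := ('rV[R]_d * 'M[R]_d)%type.

Definition tens (a b : 'rV[R]_d) : 'M[R]_d := a^T *m b.

Definition inG (g : T2) : Prop :=
  (1 / 2%:R) *: (g.2 + g.2^T) = (1 / 2%:R) *: tens g.1 g.1 :> 'M[R]_d.

Definition gmul (g h : T2) : T2 := (g.1 + h.1, g.2 + tens g.1 h.1 + h.2).
Definition gone : T2 := (0, 0).
Definition ginv (g : T2) : T2 := (- g.1, - g.2 + tens g.1 g.1).

(* exp(a1,a2) = (a1, a2 + 1/2 a1 (x) a1) for antisymmetric a2; exp(x) := exp(x,0) *)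
Definition gexp2 (a1 : 'rV[R]_d) (a2 : 'M[R]_d) : T2 := (a1, a2 + (1 / 2%:R) *: tens a1 a1).
Definition gexp (x : 'rV[R]_d) : T2 := gexp2 x 0.

(* dilation: delta_l exp(a1,a2) = exp(l a1, l^2 a2), with a2 the antisymmetric
   part of g^2 - 1/2 g^1 (x) g^1 (i.e. log g) *)
Definition glog (g : T2) : 'rV[R]_d * 'M[R]_d := (g.1, g.2 - (1 / 2%:R) *: tens g.1 g.1).
Definition dil (l : R) (g : T2) : T2 := gexp2 (l *: (glog g).1) (l ^+ 2 *: (glog g).2).

Definition enorm (x : 'rV[R]_d) : R := Num.sqrt (\sum_(i < d) x 0 i ^+ 2).

Definition ccnorm (g : T2) : R :=
  inf [set r : R | exists xs : seq 'rV[R]_d,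
         xs != [::] /\ foldr gmul gone (map gexp xs) = g /\
         r = \sum_(x <- xs) enorm x].

(* paths are maps R -> T2, only their values on [0,1] matter *)
Definition C0path (x : R -> T2) : Prop :=
  {within `[0, 1], continuous x} /\ x 0 = gone /\
  (forall t, 0 <= t <= 1 -> inG (x t)).

Definition incr (x : R -> T2) (s t : R) : T2 := gmul (ginv (x s)) (x t).

Definition dinf (x y : R -> T2) : \bar R :=
  ereal_sup [set z | exists s t : R, 0 <= s /\ s < t /\ t <= 1 /\
     z = (ccnorm (gmul (ginv (incr x s t)) (incr y s t)))%:E].

Definition dphi (phi : R -> R) (x y : R -> T2) : \bar R :=
  ereal_sup [set z | exists s t : R, 0 <= s /\ s < t /\ t <= 1 /\
     z = (ccnorm (gmul (ginv (incr x s t)) (incr y s t)) / phi (t - s))%:E].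

Definition Xi (p : R) (phi : R -> R) : Prop :=
  phi 0 = 0 /\ (forall x, 0 <= x <= 1 -> 0 <= phi x) /\
  (forall x y, 0 <= x <= 1 -> 0 <= y <= 1 -> x < y -> phi x `^ p < phi y `^ p) /\
  (forall x y l, 0 <= x <= 1 -> 0 <= y <= 1 -> 0 <= l <= 1 ->
     phi (l * x + (1 - l) * y) `^ p <= l * phi x `^ p + (1 - l) * phi y `^ p).

(* Upsilon_n: geodesic-type interpolation on dyadic intervals.
   For t in [k/2^n,(k+1)/2^n] (k = min(floor(2^n t), 2^n - 1)),
   Upsilon_n(x)_t = x_{k/2^n} (x) delta_{2^n t - k}(x_{k/2^n,(k+1)/2^n}). *)
Definition Ups (n : nat) (x : R -> T2) (t : R) : T2 :=
  let k := minn (Num.truncn (t * 2%:R ^+ n)) (2 ^ n - 1)%N in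
  let a := k%:R / 2%:R ^+ n in
  let b := k.+1%:R / 2%:R ^+ n in
  gmul (x a) (dil (2%:R ^+ n * t - k%:R) (incr x a b)).

End Carnot.

(* Main.v *)
Require Import Defs.
From HB Require Import structures.
From mathcomp Require Import all_boot all_order all_algebra.
From mathcomp Require Import all_classical all_reals all_analysis.
From mathcomp Require Import ring lra zify.
Import Order.TTheory GRing.Theory Num.Theory.
Import numFieldNormedType.Exports.
Local Open Scope classical_set_scope.
Local Open Scope ring_scope.

Section Aux.
Context {R : realType} {d : nat}.
Implicit Types (g h e w : T2 R d) (u : 'rV[R]_d).

Lemma tensE (a b : 'rV[R]_d) i j : tens a b i j = a 0 i * b 0 j.
Proof. by rewrite /tens !mxE big_ord1 !mxE. Qed.

Ltac mxr := apply/matrixP => ? ?; rewrite ?(tensE, mxE); ring.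
Local Notation gone := (@gone R d).

Lemma pairE (a b : T2 R d) : a.1 = b.1 -> a.2 = b.2 -> a = b.
Proof. by case: a b => ? ? [? ?] /= -> ->. Qed.

Lemma gmulA g h e : gmul g (gmul h e) = gmul (gmul g h) e.
Proof. by apply: pairE => /=; mxr. Qed.
Lemma gmul1g g : gmul gone g = g.
Proof. by apply: pairE => /=; mxr. Qed.
Lemma gmulg1 g : gmul g gone = g.
Proof. by apply: pairE => /=; mxr. Qed.
Lemma gmulVg g : gmul (ginv g) g = gone.
Proof. by apply: pairE => /=; mxr. Qed.
Lemma gmulgV g : gmul g (ginv g) = gone.
Proof. by apply: pairE => /=; mxr. Qed.
Lemma ginvM g h : ginv (gmul g h) = gmul (ginv h) (ginv g).
Proof. by apply: pairE => /=; mxr. Qed.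
Lemma ginv1 : ginv (gone : T2 R d) = gone.
Proof. by apply: pairE => /=; mxr. Qed.
Lemma ginvK g : ginv (ginv g) = g.
Proof. by apply: pairE => /=; mxr. Qed.
Lemma dilE l g : dil l g = (l *: g.1, l ^+ 2 *: g.2).
Proof. by apply: pairE => /=; mxr. Qed.
Lemma dilM l g h : dil l (gmul g h) = gmul (dil l g) (dil l h).
Proof. by rewrite !dilE; apply: pairE => /=; mxr. Qed.
Lemma dilV l g : dil l (ginv g) = ginv (dil l g).
Proof. by rewrite !dilE; apply: pairE => /=; mxr. Qed.
Lemma dil1 g : dil 1 g = g.
Proof. by rewrite !dilE; apply: pairE => /=; mxr. Qed.
Lemma dil0 g : dil 0 g = gone.
Proof. by rewrite !dilE; apply: pairE => /=; mxr. Qed.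


Definition nm {m n} (A : 'M[R]_(m, n)) : R := \sum_i \sum_j `|A i j|.

Lemma nm_ge0 {m n} (A : 'M[R]_(m, n)) : 0 <= nm A.
Proof. by apply: sumr_ge0 => i _; apply: sumr_ge0 => j _. Qed.

Lemma nmD {m n} (A B : 'M[R]_(m, n)) : nm (A + B) <= nm A + nm B.
Proof.
rewrite /nm -big_split; apply: ler_sum => i _; rewrite -big_split.
by apply: ler_sum => j _; rewrite mxE ler_normD.
Qed.

Lemma nmN {m n} (A : 'M[R]_(m, n)) : nm (- A) = nm A.
Proof. by apply: eq_bigr => i _; apply: eq_bigr => j _; rewrite mxE normrN. Qed.

Lemma nmZ {m n} c (A : 'M[R]_(m, n)) : nm (c *: A) = `|c| * nm A.
Proof.
rewrite /nm mulr_sumr; apply: eq_bigr => i _; rewrite mulr_sumr.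
by apply: eq_bigr => j _; rewrite mxE normrM.
Qed.

Lemma nm_row u : nm u = \sum_j `|u 0 j|.
Proof. by rewrite /nm big_ord1. Qed.

Lemma nm_tens (a b : 'rV[R]_d) : nm (tens a b) = nm a * nm b.
Proof.
rewrite !nm_row /nm mulr_suml; apply: eq_bigr => i _; rewrite mulr_sumr.
by apply: eq_bigr => j _; rewrite tensE normrM.
Qed.

Lemma nm_entry {m n} (A : 'M[R]_(m, n)) i j : `|A i j| <= nm A.
Proof.
rewrite /nm (bigD1 i) //= (bigD1 j) //= -addrA ler_wpDr //.
apply: addr_ge0; first by apply: sumr_ge0.
by apply: sumr_ge0 => k _; apply: sumr_ge0.
Qed.

Lemma nmB {m n} (A B : 'M[R]_(m, n)) : nm (A - B) <= nm A + nm B.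
Proof. by rewrite -(nmN B); apply: nmD. Qed.

Definition rho g := nm g.1 + Num.sqrt (nm g.2).

Lemma rho_ge0 g : 0 <= rho g.
Proof. by rewrite addr_ge0 ?nm_ge0 ?sqrtr_ge0. Qed.

Lemma sqrt_le (x b : R) : 0 <= b -> x <= b ^+ 2 -> Num.sqrt x <= b.
Proof.
move=> b0 xb; apply: le_trans (ler_wsqrtr xb) _.
by rewrite sqrtr_sqr ger0_norm.
Qed.

Lemma sqrtD3 {x y z : R} : 0 <= x -> 0 <= y -> 0 <= z ->
  Num.sqrt (x + y + z) <= Num.sqrt x + Num.sqrt y + Num.sqrt z.
Proof.
move=> x0 y0 z0; apply: sqrt_le; first by rewrite !addr_ge0 ?sqrtr_ge0.
have := sqr_sqrtr x0; have := sqr_sqrtr y0; have := sqr_sqrtr z0.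
have := sqrtr_ge0 x; have := sqrtr_ge0 y; have := sqrtr_ge0 z.
set a := Num.sqrt x; set b := Num.sqrt y; set c := Num.sqrt z.
move=> ? ? ? <- <- <-; nra.
Qed.

Lemma sqrtD {x y : R} : 0 <= x -> 0 <= y ->
  Num.sqrt (x + y) <= Num.sqrt x + Num.sqrt y.
Proof.
move=> x0 y0; have := sqrtD3 x0 y0 (lexx 0); by rewrite addr0 sqrtr0 addr0.
Qed.

Lemma sqrt_prod {a b : R} : 0 <= a -> 0 <= b -> Num.sqrt (a * b) <= a + b.
Proof. by move=> a0 b0; apply: sqrt_le; nra. Qed.

Lemma rho_mul g h : rho (gmul g h) <= 2 * (rho g + rho h).
Proof.
rewrite /rho /=.
have h1 := nmD g.1 h.1.
have h2 : nm (g.2 + tens g.1 h.1 + h.2) <= nm g.2 + nm g.1 * nm h.1 + nm h.2.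
  by rewrite -nm_tens; apply: le_trans (nmD _ _) _; rewrite lerD2r nmD.
have := ler_wsqrtr h2.
have := sqrtD3 (nm_ge0 g.2) (mulr_ge0 (nm_ge0 g.1) (nm_ge0 h.1)) (nm_ge0 h.2).
have := sqrt_prod (nm_ge0 g.1) (nm_ge0 h.1).
have := sqrtr_ge0 (nm g.2); have := sqrtr_ge0 (nm h.2).
have := nm_ge0 g.1; have := nm_ge0 h.1.
lra.
Qed.

Lemma rho_inv g : rho (ginv g) <= 2 * rho g.
Proof.
rewrite /rho /= nmN.
have h2 : nm (- g.2 + tens g.1 g.1) <= nm g.2 + nm g.1 ^+ 2.
  by apply: le_trans (nmD _ _) _; rewrite nmN nm_tens expr2.
have := ler_wsqrtr h2.
have := sqrtD (nm_ge0 g.2) (sqr_ge0 (nm g.1)).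
rewrite sqrtr_sqr ger0_norm ?nm_ge0 //.
have := sqrtr_ge0 (nm g.2); have := nm_ge0 g.1.
lra.
Qed.

Lemma rho_dil l g : rho (dil l g) = `|l| * rho g.
Proof.
rewrite dilE /rho /= !nmZ sqrtrM ?normr_ge0 // normrX sqrtr_sqr normr_id.
by rewrite mulrDr.
Qed.

Lemma rho_conj h e :
  rho (gmul (ginv h) (gmul e h)) <= rho e + Num.sqrt (2 * rho e * rho h).
Proof.
have E : gmul (ginv h) (gmul e h) = (e.1, e.2 + tens e.1 h.1 - tens h.1 e.1).
  by apply: pairE => /=; mxr.
rewrite E /rho /=.
have h2 : nm (e.2 + tens e.1 h.1 - tens h.1 e.1) <= nm e.2 + 2 * (rho e * rho h).
  apply: le_trans (nmB _ _) _; apply: le_trans (lerD (nmD _ _) (lexx _)) _.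
  rewrite !nm_tens -addrA lerD2l.
  have : nm e.1 <= rho e by rewrite /rho lerDl sqrtr_ge0.
  have : nm h.1 <= rho h by rewrite /rho lerDl sqrtr_ge0.
  have := nm_ge0 e.1; have := nm_ge0 h.1. nra.
have := ler_wsqrtr h2.
have := sqrtD (nm_ge0 e.2) (mulr_ge0 (ler0n _ 2) (mulr_ge0 (rho_ge0 e) (rho_ge0 h))).
rewrite mulrA.
lra.
Qed.


Lemma rho_dd w l1 l2 : 0 <= l1 <= 1 -> 0 <= l2 <= 1 ->
  rho (gmul (ginv (dil l1 w)) (dil l2 w)) <= 3 * rho w * Num.sqrt `|l2 - l1|.
Proof.
move=> /andP[l10 l11] /andP[l20 l21].
have E : gmul (ginv (dil l1 w)) (dil l2 w) =
  ((l2 - l1) *: w.1, ((l2 - l1) * (l2 + l1)) *: w.2 + (l1 * (l1 - l2)) *: tens w.1 w.1).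
  by rewrite !dilE; apply: pairE => /=; mxr.
rewrite E /rho /= nmZ.
set D := `|l2 - l1|.
have D0 : 0 <= D by apply: normr_ge0.
have D1 : D <= 1 by rewrite /D ler_norml; apply/andP; split; lra.
set q := Num.sqrt D.
have q0 : 0 <= q by apply: sqrtr_ge0.
have qD : q ^+ 2 = D by apply: sqr_sqrtr.
have q1 : q <= 1 by apply: sqrt_le => //; rewrite expr1n.
set a := nm w.1; set X := nm w.2.
have a0 : 0 <= a by apply: nm_ge0.
have X0 : 0 <= X by apply: nm_ge0.
set sX := Num.sqrt X.
have sX0 : 0 <= sX by apply: sqrtr_ge0.
have sXX : sX ^+ 2 = X by apply: sqr_sqrtr.
have h2 : nm (((l2 - l1) * (l2 + l1)) *: w.2 + (l1 * (l1 - l2)) *: tens w.1 w.1)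
    <= D * (2 * X + a ^+ 2).
  apply: le_trans (nmD _ _) _; rewrite !nmZ nm_tens !normrM -/a -/X.
  have e1 : `|l2 + l1| <= 2 by rewrite ger0_norm; lra.
  have e2 : `|l1| <= 1 by rewrite ger0_norm.
  have e3 : `|l1 - l2| = D by rewrite /D distrC.
  rewrite e3 -/D.
  have f1 : D * `|l2 + l1| * X <= D * 2 * X.
    by apply: ler_wpM2r => //; apply: ler_wpM2l.
  have f2 : `|l1| * D * (a ^+ 2) <= 1 * D * (a ^+ 2).
    by apply: ler_wpM2r; [apply: sqr_ge0 | apply: ler_wpM2r].
  rewrite -expr2; lra.
have h3 : Num.sqrt (nm (((l2 - l1) * (l2 + l1)) *: w.2 + (l1 * (l1 - l2)) *: tens w.1 w.1))
   <= q * (2 * sX + a).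
  apply: sqrt_le; first by nra.
  apply: le_trans h2 _; rewrite -qD -sXX exprMn; apply: ler_wpM2l; first nra.
  nra.
have h4 : D * a <= q * a by rewrite -qD; apply: ler_wpM2r => //; nra.
rewrite -/D; nra.
Qed.

Lemma sqrt_small (t a b A B : R) : 0 <= t -> 0 <= A -> 0 <= a -> a <= t ^+ 2 * A ->
  0 <= b -> b <= B -> Num.sqrt (2 * a * b) <= t * (1 + 2 * A * B).
Proof.
move=> t0 A0 a0 aA b0 bB.
have tA : 0 <= t ^+ 2 * A by apply: mulr_ge0 => //; apply: sqr_ge0.
have AB : 0 <= A * B by apply: mulr_ge0 => //; lra.
apply: sqrt_le; first by nra.
have h1 : a * b <= (t ^+ 2 * A) * b by apply: ler_wpM2r.
have h2 : (t ^+ 2 * A) * b <= (t ^+ 2 * A) * B by apply: ler_wpM2l.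
have h3 : t ^+ 2 * (2 * (A * B)) <= t ^+ 2 * (1 + 2 * A * B) ^+ 2.
  by apply: ler_wpM2l; [apply: sqr_ge0 | nra].
rewrite exprMn; apply: le_trans h3; rewrite -mulrA; nra.
Qed.


Lemma inGP g : inG g <-> forall i j, g.2 i j + g.2 j i = g.1 0 i * g.1 0 j.
Proof.
split.
- move=> H i j; move/matrixP: H => /(_ i j); rewrite !(tensE, mxE) => E.
  have nz : (1 / 2%:R : R) != 0 by rewrite div1r invr_eq0 pnatr_eq0.
  exact: (mulfI nz E).
- move=> H; rewrite /inG; apply/matrixP => i j; rewrite !(tensE, mxE).
  by rewrite H.
Qed.

Lemma inG_mul g h : inG g -> inG h -> inG (gmul g h).
Proof.
move=> /inGP Hg /inGP Hh; apply/inGP => i j /=; rewrite !(tensE, mxE).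
have := Hg i j; have := Hh i j; lra.
Qed.

Lemma inG_inv g : inG g -> inG (ginv g).
Proof.
move=> /inGP Hg; apply/inGP => i j /=; rewrite !(tensE, mxE).
have := Hg i j; lra.
Qed.

Lemma inG_dil l g : inG g -> inG (dil l g).
Proof.
move=> /inGP Hg; apply/inGP => i j; rewrite dilE /= !mxE.
have := Hg i j => E.
have -> : l ^+ 2 * g.2 i j + l ^+ 2 * g.2 j i = l ^+ 2 * (g.2 i j + g.2 j i) by ring.
rewrite E; ring.
Qed.

Lemma inG_one : inG gone.
Proof. by apply/inGP => i j /=; rewrite !mxE; ring. Qed.

Lemma inG_gexp u : inG (gexp u).
Proof.
apply/inGP => i j /=; by rewrite !(tensE, mxE); field.
Qed.

Definition prd (xs : seq 'rV[R]_d) : T2 R d := foldr (@gmul R d) gone (map (@gexp R d) xs).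

Lemma prd_cat xs ys : prd (xs ++ ys) = gmul (prd xs) (prd ys).
Proof.
elim: xs => [|x xs IH] /=; first by rewrite gmul1g.
by rewrite /prd /= -/(prd _) IH gmulA.
Qed.

Lemma prd_cons x xs : prd (x :: xs) = gmul (gexp x) (prd xs).
Proof. by []. Qed.

Lemma prd_nil : prd [::] = gone.
Proof. by []. Qed.

Lemma prd_inG xs : inG (prd xs).
Proof.
elim: xs => [|x xs IH]; first exact: inG_one.
by rewrite prd_cons; apply: inG_mul => //; apply: inG_gexp.
Qed.

Definition enlen (xs : seq 'rV[R]_d) := \sum_(x <- xs) enorm x.

Definition Rset g := [set r : R | exists xs : seq 'rV[R]_d,
         xs != [::] /\ foldr (@gmul R d) gone (map (@gexp R d) xs) = g /\
         r = \sum_(x <- xs) enorm x].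

Lemma ccnormE g : ccnorm g = inf (Rset g).
Proof. by []. Qed.

Lemma enorm_ge0 u : 0 <= enorm u.
Proof. exact: sqrtr_ge0. Qed.

Lemma enlen_ge0 xs : 0 <= enlen xs.
Proof. by apply: sumr_ge0 => x _; apply: enorm_ge0. Qed.

Lemma Rset_lb g : has_lbound (Rset g).
Proof.
exists 0 => r [xs [_ [_ ->]]]; exact: enlen_ge0.
Qed.

Lemma ccnorm_le g xs : xs != [::] -> prd xs = g -> ccnorm g <= enlen xs.
Proof.
move=> xs0 pg; rewrite ccnormE; apply: ge_inf; first exact: Rset_lb.
by exists xs.
Qed.

Lemma ccnorm_ge0 g : 0 <= ccnorm g.
Proof.
rewrite ccnormE; case: (pselect (Rset g !=set0)) => [ne|e].
  by apply: lb_le_inf => // r [xs [_ [_ ->]]]; apply: enlen_ge0.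
have -> : Rset g = set0 by apply/seteqP; split => // r Hr; apply: e; exists r.
by rewrite inf0.
Qed.


Lemma enorm_entry u k : `|u 0 k| <= enorm u.
Proof.
rewrite -sqrtr_sqr /enorm; apply: ler_wsqrtr.
rewrite (bigD1 k) //= lerDl; apply: sumr_ge0 => i _; apply: sqr_ge0.
Qed.

Lemma enorm_le_nm u : enorm u <= nm u.
Proof.
apply: sqrt_le; first exact: nm_ge0.
rewrite expr2 {1}nm_row mulr_suml; apply: ler_sum => k _.
rewrite -(ger0_norm (sqr_ge0 (u 0 k))) normrX expr2; apply: ler_wpM2l; first exact: normr_ge0.
exact: nm_entry.
Qed.

Lemma nm_le_enorm u : nm u <= (d.+1)%:R * enorm u.
Proof.
rewrite nm_row; apply: le_trans (_ : \sum_(k < d) enorm u <= _).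
  by apply: ler_sum => k _; apply: enorm_entry.
rewrite sumr_const card_ord -[enorm u *+ d]mulr_natl; apply: ler_wpM2r; first exact: enorm_ge0.
by rewrite ler_nat.
Qed.

Lemma nm_delta (i j : 'I_d) : nm (delta_mx i j : 'M[R]_d) = 1.
Proof.
rewrite /nm (bigD1 i) //= (bigD1 j) //= mxE !eqxx /= normr1.
rewrite big1 ?addr0; last by move=> k /negbTE kj; rewrite mxE kj andbF normr0.
rewrite big1 ?addr0 // => k /negbTE ki; apply: big1 => l _.
by rewrite mxE ki normr0.
Qed.

Lemma nm_delta_row (i : 'I_d) : nm (delta_mx 0 i : 'rV[R]_d) = 1.
Proof.
rewrite /nm big_ord1 (bigD1 i) //= mxE !eqxx /= normr1.
by rewrite big1 ?addr0 // => k /negbTE ki; rewrite mxE ki normr0.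
Qed.

Lemma tens_delta (i j : 'I_d) : tens (delta_mx 0 i) (delta_mx 0 j) = delta_mx i j :> 'M[R]_d.
Proof. by rewrite /tens trmx_delta mul_delta_mx. Qed.

Lemma tensZ (a b : R) (x y : 'rV[R]_d) : tens (a *: x) (b *: y) = (a * b) *: tens x y.
Proof. mxr. Qed.

Lemma prd_comm a b : prd [:: a; b; -a; -b] = (0, tens a b - tens b a).
Proof. by apply: pairE => /=; apply/matrixP => ? ?; rewrite ?(tensE, mxE); field. Qed.

Lemma prd_flatten (I : Type) (f : I -> seq 'rV[R]_d) s :
  prd (flatten (map f s)) = foldr (@gmul R d) gone (map (fun p => prd (f p)) s).
Proof. by elim: s => [|p s IH] //=; rewrite prd_cat IH. Qed.

Lemma prd_zero (I : Type) (B : I -> 'M[R]_d) s :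
  foldr (@gmul R d) gone (map (fun p => (0, B p)) s) = (0, \sum_(p <- s) B p).
Proof.
elim: s => [|p s IH] /=; first by rewrite big_nil.
rewrite IH big_cons; apply: pairE => /=; first by rewrite addr0.
by mxr.
Qed.

Lemma sum_delta1 (F : 'I_d -> R) k : \sum_i F i * (k == i)%:R = F k.
Proof.
rewrite (bigD1 k) //= eqxx mulr1 big1 ?addr0 // => j /negbTE jk.
by rewrite eq_sym jk mulr0.
Qed.

Section Constr.
Variable A : 'M[R]_d.
Let cf (p : 'I_d * 'I_d) := A p.1 p.2 / 2.
Let al p := Num.sqrt `|cf p|.
Let be p := Num.sg (cf p) * al p.
Let va p : 'rV[R]_d := al p *: delta_mx 0 p.1.
Let vb p : 'rV[R]_d := be p *: delta_mx 0 p.2.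
Definition lst := flatten (map (fun p => [:: va p; vb p; - va p; - vb p])
   (index_enum ('I_d * 'I_d)%type)).

Lemma prd_lst : A^T = - A -> prd lst = (0, A).
Proof.
move=> AT.
rewrite /lst prd_flatten.
have E : forall p, prd [:: va p; vb p; - va p; - vb p] =
    (0, cf p *: (delta_mx p.1 p.2 - delta_mx p.2 p.1)).
  move=> p; rewrite prd_comm /va /vb !tensZ !tens_delta [be p * al p]mulrC.
  have -> : al p * be p = cf p.
    rewrite /be mulrCA -expr2 sqr_sqrtr ?normr_ge0 //; exact: mulr_sg_norm.
  by rewrite -scalerBr.
rewrite (eq_map E) prd_zero; congr (_, _).
apply/matrixP => k l; rewrite summxE.
rewrite -(pair_big xpredT xpredT (fun i j => (cf (i, j) *: (delta_mx i j - delta_mx j i)) k l)) /=.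
have AE : A l k = - A k l by move/matrixP: AT => /(_ k l); rewrite !mxE.
transitivity (\sum_i \sum_j (A i j / 2 * ((k == i)%:R * (l == j)%:R)
                               - A i j / 2 * ((k == j)%:R * (l == i)%:R))).
  apply: eq_bigr => i _; apply: eq_bigr => j _.
  by rewrite !mxE -!natrM !mulnb /cf /= mulrBr.
transitivity (\sum_i ((k == i)%:R * (A i l / 2) - (l == i)%:R * (A i k / 2))).
  apply: eq_bigr => i _; rewrite sumrB.
  rewrite (eq_bigr (fun j => ((k == i)%:R * (A i j / 2)) * (l == j)%:R)); last by move=> j _; ring.
  rewrite sum_delta1.
  rewrite [X in _ - X](eq_bigr (fun j => ((l == i)%:R * (A i j / 2)) * (k == j)%:R)); last by move=> j _; ring.
  by rewrite sum_delta1.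
rewrite sumrB.
rewrite (eq_bigr (fun i => (A i l / 2) * (k == i)%:R)); last by move=> i _; ring.
rewrite sum_delta1.
rewrite [X in _ - X](eq_bigr (fun i => (A i k / 2) * (l == i)%:R)); last by move=> i _; ring.
by rewrite sum_delta1 AE; field.
Qed.


Lemma enlen_lst : enlen lst <= 4 * (d * d)%:R * Num.sqrt (nm A).
Proof.
rewrite /enlen /lst big_flatten /= big_map.
apply: le_trans (_ : \sum_(p : 'I_d * 'I_d) 4 * Num.sqrt (nm A) <= _); last first.
  rewrite sumr_const card_prod !card_ord -[_ *+ _]mulr_natl natrM; lra.
apply: ler_sum => p _; rewrite !big_cons big_nil addr0.
have hal : al p <= Num.sqrt (nm A).
  apply: ler_wsqrtr; apply: le_trans (nm_entry A p.1 p.2).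
  rewrite /cf normrM; apply: ler_piMr; first exact: normr_ge0.
  by rewrite normfV ger0_norm ?ler0n // invf_le1 ?ltr0n // ler1n.
have al0 : 0 <= al p by apply: sqrtr_ge0.
have ha : enorm (va p) <= al p.
  by apply: le_trans (enorm_le_nm _) _; rewrite nmZ nm_delta_row mulr1 ger0_norm.
have ha' : enorm (- va p) <= al p.
  by apply: le_trans (enorm_le_nm _) _; rewrite nmN nmZ nm_delta_row mulr1 ger0_norm.
have hb : enorm (vb p) <= al p.
  apply: le_trans (enorm_le_nm _) _; rewrite nmZ nm_delta_row mulr1 /be normrM [`|al p|]ger0_norm // normr_sg.
  by case: (_ != 0); rewrite /= ?mul1r ?mul0r.
have hb' : enorm (- vb p) <= al p.
  apply: le_trans (enorm_le_nm _) _; rewrite nmN nmZ nm_delta_row mulr1 /be normrM [`|al p|]ger0_norm // normr_sg.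
  by case: (_ != 0); rewrite /= ?mul1r ?mul0r.
lra.
Qed.

End Constr.


Lemma nm0 {m n} : nm (0 : 'M[R]_(m, n)) = 0.
Proof. by apply: big1 => i _; apply: big1 => j _; rewrite mxE normr0. Qed.

Lemma enlen_cons x xs : enlen (x :: xs) = enorm x + enlen xs.
Proof. by rewrite /enlen big_cons. Qed.

Definition Kc : R := 1 + 4 * (d * d)%:R.
Definition Dc : R := (d.+1)%:R.

Lemma Kc_ge0 : 0 <= Kc.
Proof. by rewrite /Kc addr_ge0 // mulr_ge0 // ler0n. Qed.

Lemma Dc_gt0 : 0 < Dc.
Proof. by rewrite /Dc ltr0n. Qed.

Lemma ccnorm_upper g : inG g -> Rset g !=set0 /\ ccnorm g <= Kc * rho g.
Proof.
move=> /inGP Hg.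
set A := g.2 - (1 / 2%:R) *: tens g.1 g.1.
have AT : A^T = - A.
  apply/matrixP => i j; rewrite !(tensE, mxE); have := Hg i j; lra.
have P : prd (g.1 :: lst A) = g.
  rewrite prd_cons prd_lst //; apply: pairE => /=; first by mxr.
  by rewrite /A; mxr.
have ne : (g.1 :: lst A) != [::] by [].
split; first by exists (enlen (g.1 :: lst A)); exists (g.1 :: lst A).
apply: le_trans (ccnorm_le _ _ ne P) _.
rewrite enlen_cons.
have h1 := enorm_le_nm g.1.
have h2 := enlen_lst A.
have h3 : Num.sqrt (nm A) <= Num.sqrt (nm g.2) + nm g.1.
  have : nm A <= nm g.2 + nm g.1 ^+ 2.
    apply: le_trans (nmB _ _) _; rewrite nmZ nm_tens lerD2l expr2.
    apply: ler_piMl; first by apply: mulr_ge0; apply: nm_ge0.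
    by rewrite normrM normr1 mul1r normfV ger0_norm ?ler0n // invf_le1 ?ltr0n // ler1n.
  move/ler_wsqrtr => h; apply: le_trans h _.
  apply: le_trans (sqrtD (nm_ge0 _) (sqr_ge0 _)) _.
  by rewrite sqrtr_sqr ger0_norm ?nm_ge0.
have dd : 0 <= (d * d)%:R :> R by apply: ler0n.
rewrite /Kc /rho.
have := nm_ge0 g.1; have := sqrtr_ge0 (nm g.2); have := sqrtr_ge0 (nm A).
nra.
Qed.

Lemma repr_bound xs : nm (prd xs).1 <= Dc * enlen xs /\
  nm (prd xs).2 <= Dc ^+ 2 * enlen xs ^+ 2.
Proof.
elim: xs => [|x xs [IH1 IH2]].
  by rewrite /= /enlen big_nil !nm0 !mulr0 expr0n /= mulr0.
rewrite prd_cons enlen_cons /=.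
set h := prd xs in IH1 IH2 *; set e := enorm x; set L := enlen xs in IH1 IH2 *.
have e0 : 0 <= e by apply: enorm_ge0.
have L0 : 0 <= L by apply: enlen_ge0.
have D0 := Dc_gt0.
have nx : nm x <= Dc * e by apply: nm_le_enorm.
have nx0 := nm_ge0 x; have nh0 := nm_ge0 h.1; have nh20 := nm_ge0 h.2.
split.
  apply: le_trans (nmD _ _) _; rewrite mulrDr; lra.
have s1 : nm (0 + (1 / 2%:R) *: tens x x + tens x h.1 + h.2) <=
    nm x * nm x + nm x * nm h.1 + nm h.2.
  apply: le_trans (nmD _ _) _; rewrite lerD2r.
  apply: le_trans (nmD _ _) _; rewrite add0r nmZ !nm_tens lerD2r.
  apply: ler_piMl; first by apply: mulr_ge0.
  by rewrite normrM normr1 mul1r normfV ger0_norm ?ler0n // invf_le1 ?ltr0n // ler1n.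
apply: le_trans s1 _.
have t1 : nm x * nm x <= (Dc * e) * (Dc * e) by apply: ler_pM.
have t2 : nm x * nm h.1 <= (Dc * e) * (Dc * L) by apply: ler_pM.
have : 0 <= Dc * e * (Dc * L) by apply: mulr_ge0; apply: mulr_ge0 => //; lra.
have : Dc ^+ 2 * (e + L) ^+ 2 = Dc * e * (Dc * e) + 2 * (Dc * e * (Dc * L)) + Dc ^+ 2 * L ^+ 2
  by ring.
lra.
Qed.

Lemma ccnorm_lower g : inG g -> rho g <= 2 * Dc * ccnorm g.
Proof.
move=> Gg; have [ne _] := ccnorm_upper _ Gg.
have D0 := Dc_gt0.
rewrite -ler_pdivrMl ?mulr_gt0 // ccnormE; apply: lb_le_inf => // r [xs [_ [P ->]]].
rewrite ler_pdivrMl ?mulr_gt0 //.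
have [h1 h2] := repr_bound xs; rewrite /prd P in h1 h2.
rewrite -/(enlen xs) /rho.
have : Num.sqrt (nm g.2) <= Dc * enlen xs.
  apply: sqrt_le; first by apply: mulr_ge0; [lra | apply: enlen_ge0].
  by rewrite exprMn.
lra.
Qed.

End Aux.

Section Idents.
Context {R : realType} {d : nat}.
Implicit Types (a b c g h : T2 R d).
Ltac mxr := apply/matrixP => ? ?; rewrite ?(tensE, mxE); ring.

Lemma cancel_l g a b : gmul (ginv (gmul g a)) (gmul g b) = gmul (ginv a) b.
Proof. by apply: pairE => /=; mxr. Qed.

Lemma incr_split a b c :
  gmul (ginv a) c = gmul (gmul (ginv a) b) (gmul (ginv b) c).
Proof. by apply: pairE => /=; mxr. Qed.

Lemma q_ident (xs xt ys yt : T2 R d) :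
  gmul (ginv (gmul (ginv xs) xt)) (gmul (ginv ys) yt) =
  gmul (gmul (ginv (gmul (ginv xs) xt))
     (gmul (ginv (gmul (ginv xs) ys)) (gmul (ginv xs) xt))) (gmul (ginv xt) yt).
Proof. by apply: pairE => /=; mxr. Qed.

Lemma D_ident (xa xb ya yb : T2 R d) (l : R) :
  gmul (ginv (gmul xa (dil l (gmul (ginv xa) xb)))) (gmul ya (dil l (gmul (ginv ya) yb)))
  = gmul (gmul (ginv (dil l (gmul (ginv xa) xb)))
        (gmul (gmul (gmul (ginv xa) ya) (ginv (dil l (gmul (ginv xa) ya))))
              (dil l (gmul (ginv xa) xb))))
     (dil l (gmul (ginv xb) yb)).
Proof. by rewrite !dilE; apply: pairE => /=; mxr. Qed.

End Idents.


Section UpsSec.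
Context {R : realType} {d : nat} (n : nat).
Local Notation gone := (@gone R d).
Local Notation NR := (2%:R ^+ n : R).

Definition pt (j : nat) : R := j%:R / 2%:R ^+ n.

Lemma NR_gt0 : 0 < NR.
Proof. by rewrite exprn_gt0 // ltr0n. Qed.

Lemma NRE : NR = (2 ^ n)%:R.
Proof. by rewrite natrX. Qed.

Lemma pt_mul j t : (pt j <= t) = (j%:R <= t * NR).
Proof. by rewrite /pt ler_pdivrMr ?NR_gt0. Qed.

Lemma pt_mul' j t : (t <= pt j) = (t * NR <= j%:R).
Proof. by rewrite /pt ler_pdivlMr ?NR_gt0. Qed.

Lemma pt_ge0 j : 0 <= pt j.
Proof. by rewrite /pt divr_ge0 ?ler0n // ltW // NR_gt0. Qed.

Lemma pt_le1 j : (j <= 2 ^ n)%N -> pt j <= 1.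
Proof. by move=> jN; rewrite /pt ler_pdivrMr ?NR_gt0 // mul1r NRE ler_nat. Qed.

Lemma pt0 : pt 0 = 0.
Proof. by rewrite /pt mul0r. Qed.

Lemma ptN : pt (2 ^ n) = 1.
Proof. by rewrite /pt NRE divff // pnatr_eq0 expn_eq0. Qed.

Lemma ptS j : pt j.+1 - pt j = NR^-1.
Proof. by rewrite /pt -mulrBl -natrB // subSnn mul1r. Qed.

Lemma lam_in j t : pt j <= t <= pt j.+1 -> 0 <= NR * t - j%:R <= 1.
Proof.
rewrite pt_mul pt_mul' => /andP[h1 h2]; rewrite [NR * t]mulrC.
apply/andP; split; first lra.
by move: h2; rewrite -natr1; lra.
Qed.
Arguments lam_in {j t}.

Lemma Ups_repr (z : R -> T2 R d) j t : (j < 2 ^ n)%N -> pt j <= t <= pt j.+1 ->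
  Ups n z t = gmul (z (pt j)) (dil (NR * t - j%:R) (incr z (pt j) (pt j.+1))).
Proof.
move=> jN /andP[h1 h2]; move: (h1) (h2); rewrite pt_mul pt_mul' => H1 H2.
have t0 : 0 <= t * NR by apply: le_trans H1; apply: ler0n.
rewrite /Ups -!/(pt _).
case: (ltP (t * NR) j.+1%:R) => [lt|ge].
  have -> : Num.truncn (t * NR) = j by apply: truncn_def; rewrite H1 lt.
  by rewrite (minn_idPl _) //; lia.
have E : t * NR = j.+1%:R by apply: le_anti; rewrite H2 ge.
have T : Num.truncn (t * NR) = j.+1.
  by apply: truncn_def; rewrite E lexx /= ltr_nat.
rewrite T; case: (ltnP j.+1 (2 ^ n)) => jN'.
  rewrite (minn_idPl _); last by lia.
  have -> : NR * t - j.+1%:R = 0 by rewrite mulrC E subrr.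
  have -> : NR * t - j%:R = 1 by rewrite mulrC E -natr1; ring.
  by rewrite dil0 gmulg1 dil1 /incr gmulA gmulgV gmul1g.
by rewrite (minn_idPr _); [have -> : (2 ^ n - 1)%N = j by lia | lia].
Qed.
Arguments Ups_repr z {j t}.

Lemma exists_j t : 0 <= t <= 1 -> exists2 j, (j < 2 ^ n)%N & pt j <= t <= pt j.+1.
Proof.
move=> /andP[t0 t1].
have t0' : 0 <= t * NR by apply: mulr_ge0 => //; apply: ltW; apply: NR_gt0.
have /andP[T1 T2] := truncn_itv t0'.
have N0 : (0 < 2 ^ n)%N by rewrite expn_gt0.
case: (ltnP (Num.truncn (t * NR)) (2 ^ n)) => TN.
  exists (Num.truncn (t * NR)) => //; rewrite pt_mul pt_mul' T1 /=; exact: ltW.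
exists (2 ^ n - 1)%N; first by lia.
have tN : t * NR <= (2 ^ n)%:R by rewrite NRE -{2}(mul1r (2 ^ n)%:R) ler_wpM2r.
rewrite subn1 prednK // pt_mul pt_mul' tN andbT.
apply: le_trans T1; rewrite ler_nat; lia.
Qed.
Arguments exists_j {t}.


Local Notation Vz z j := (incr z (pt j) (pt j.+1)).

Lemma Ups_incr_same (z : R -> T2 R d) j s t : (j < 2 ^ n)%N ->
  pt j <= s <= pt j.+1 -> pt j <= t <= pt j.+1 ->
  rho (incr (Ups n z) s t) <= 3 * rho (Vz z j) * Num.sqrt (NR * `|t - s|).
Proof.
move=> jN hs ht; rewrite /incr (Ups_repr z jN hs) (Ups_repr z jN ht) cancel_l.
have E : `|(NR * t - j%:R) - (NR * s - j%:R)| = NR * `|t - s|.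
  by rewrite (_ : _ - _ = NR * (t - s)); [rewrite normrM ger0_norm // ltW // NR_gt0 | ring].
rewrite -E; exact: rho_dd _ _ _ (lam_in hs) (lam_in ht).
Qed.
Arguments Ups_incr_same z {j s t}.

Lemma Ups_holder (z : R -> T2 R d) V s t :
  (forall j, (j < 2 ^ n)%N -> rho (Vz z j) <= V) -> 0 <= V ->
  0 <= s -> s <= t -> t <= 1 -> t - s <= NR^-1 ->
  rho (incr (Ups n z) s t) <= 12 * V * Num.sqrt NR * Num.sqrt (t - s).
Proof.
move=> HV V0 s0 st t1 tsN.
have NR0 := NR_gt0.
have Ni : 0 < NR^-1 by rewrite invr_gt0.
have [j jN /andP[sj1 sj2]] := exists_j (t:=s) ltac:(apply/andP; split; lra).
have sq0 := sqrtr_ge0 (t - s); have sqN := sqrtr_ge0 NR.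
have Vj := HV j jN; have r0 := rho_ge0 (Vz z j).
case: (leP t (pt j.+1)) => tj.
  have := Ups_incr_same z jN (s:=s) (t:=t) ltac:(by rewrite sj1 sj2)
    ltac:(apply/andP; split; lra).
  rewrite ger0_norm ?subr_ge0 // (sqrtrM _ (ltW NR0)).
  move=> h; apply: le_trans h _.
  have S0 : 0 <= Num.sqrt NR * Num.sqrt (t - s) by apply: mulr_ge0.
  rewrite -[12 * V * _ * _]mulrA; apply: ler_wpM2r => //; lra.
have jN' : (j.+1 < 2 ^ n)%N.
  rewrite ltnNge; apply/negP => jN2.
  have E1 : j.+1 = (2 ^ n)%N by apply/eqP; rewrite eqn_leq jN2 andbT.
  have : pt j.+1 = 1 by rewrite E1 ptN.
  lra.
have tj2 : t <= pt j.+2.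
  have := ptS j.+1; lra.
set c := pt j.+1 in sj2 tj *.
have Es : incr (Ups n z) s t = gmul (incr (Ups n z) s c) (incr (Ups n z) c t).
  by rewrite /incr -incr_split.
rewrite Es.
apply: le_trans (rho_mul _ _) _.
have h1 := Ups_incr_same z jN (s:=s) (t:=c) ltac:(by rewrite sj1 sj2)
    ltac:(rewrite /c; apply/andP; split; [have := ptS j; lra | lra]).
have h2 := Ups_incr_same z jN' (s:=c) (t:=t) ltac:(rewrite /c; apply/andP; split; [lra | have := ptS j.+1; lra])
    ltac:(apply/andP; split; [rewrite -/c; lra | exact: tj2]).
have Vj' := HV _ jN'; have r0' := rho_ge0 (Vz z j.+1).
have e1 : Num.sqrt (NR * `|c - s|) <= Num.sqrt NR * Num.sqrt (t - s).
  rewrite -(sqrtrM _ (ltW NR0)); apply: ler_wsqrtr; apply: ler_wpM2l; first exact: ltW NR0.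
  by rewrite ger0_norm ?subr_ge0 // lerD2r; apply: ltW.
have e2 : Num.sqrt (NR * `|t - c|) <= Num.sqrt NR * Num.sqrt (t - s).
  rewrite -(sqrtrM _ (ltW NR0)); apply: ler_wsqrtr; apply: ler_wpM2l; first exact: ltW NR0.
  by rewrite ger0_norm ?subr_ge0 ?lerD2l ?lerN2 //; apply: ltW.
set S := Num.sqrt NR * Num.sqrt (t - s) in e1 e2 *.
have S0 : 0 <= S by apply: mulr_ge0.
have f1 : 3 * rho (Vz z j) * Num.sqrt (NR * `|c - s|) <= 3 * V * S.
  apply: ler_pM; [by rewrite mulr_ge0 | exact: sqrtr_ge0 | by rewrite ler_wpM2l | exact: e1].
have f2 : 3 * rho (Vz z j.+1) * Num.sqrt (NR * `|t - c|) <= 3 * V * S.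
  apply: ler_pM; [by rewrite mulr_ge0 | exact: sqrtr_ge0 | by rewrite ler_wpM2l | exact: e2].
apply: le_trans (ler_wpM2l (ler0n _ 2) (lerD (le_trans h1 f1) (le_trans h2 f2))) _.
have -> : 2%:R * (3 * V * S + 3 * V * S) = 12 * V * Num.sqrt NR * Num.sqrt (t - s)
  by rewrite /S; ring.
exact: lexx.
Qed.



Lemma ident_Vy (xa xb ya yb : T2 R d) :
  gmul (ginv ya) yb = gmul (ginv (gmul (ginv xa) ya))
     (gmul (gmul (ginv xa) xb) (gmul (ginv xb) yb)).
Proof. by apply: pairE => /=; apply/matrixP => ? ?; rewrite ?(tensE, mxE); ring. Qed.

Lemma arith_D (τ M rf S reb : R) : 0 <= τ <= 1 -> 0 <= M -> rf <= 6 * τ ^+ 4 ->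
  S <= τ ^+ 2 * (1 + 2 * 6 * (6 * M)) -> reb <= τ ^+ 4 ->
  2 * (rf + S + reb) <= τ ^+ 2 * (16 + 144 * M).
Proof.
move=> /andP[t0 t1] M0 h1 h2 h3.
have t4 : τ ^+ 4 <= τ ^+ 2.
  have -> : τ ^+ 4 = τ ^+ 2 * τ ^+ 2 by rewrite -exprD.
  by rewrite ler_piMr ?sqr_ge0 // expr_le1.
have : τ ^+ 2 * (1 + 2 * 6 * (6 * M)) = τ ^+ 2 + 72 * (τ ^+ 2 * M) by ring.
have : τ ^+ 2 * (16 + 144 * M) = 16 * τ ^+ 2 + 144 * (τ ^+ 2 * M) by ring.
lra.
Qed.

Lemma arith_q (τ AD M rD S rDt : R) : 0 <= τ <= 1 -> 0 <= AD ->
  rD <= τ ^+ 2 * AD -> S <= τ * (1 + 2 * (2 * AD) * (84 * M)) -> rDt <= τ ^+ 2 * AD ->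
  2 * (2 * rD + S + rDt) <= τ * (2 * (3 * AD + 1 + 336 * AD * M)).
Proof.
move=> /andP[t0 t1] A0 h1 h2 h3.
have t2 : τ ^+ 2 * AD <= τ * AD.
  by apply: ler_wpM2r => //; rewrite expr2 ler_piMr.
have : τ * (1 + 2 * (2 * AD) * (84 * M)) = τ + 336 * (τ * AD * M) by ring.
have : τ * (2 * (3 * AD + 1 + 336 * AD * M)) = 6 * (τ * AD) + 2 * τ + 672 * (τ * AD * M) by ring.
lra.
Qed.

End UpsSec.


Section Paths.
Variables (R : realType) (d n : nat).
Local Notation NR := (2%:R ^+ n : R).
Local Notation pt := (@pt R n).
Local Notation Vz z j := (incr z (pt j) (pt j.+1)).
Implicit Types (x y z : R -> T2 R d).

Lemma dil_rho_le l (g : T2 R d) : 0 <= l <= 1 -> rho (dil l g) <= rho g.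
Proof.
move=> /andP[l0 l1]; rewrite rho_dil ger0_norm //.
by rewrite ler_piMl // rho_ge0.
Qed.

Lemma V_rho z M j : (forall j, (j <= 2 ^ n)%N -> rho (z (pt j)) <= M) ->
  (j < 2 ^ n)%N -> rho (Vz z j) <= 6 * M.
Proof.
move=> hz jN; rewrite /incr.
have h1 := hz j (ltnW jN); have h2 := hz j.+1 jN.
apply: le_trans (rho_mul _ _) _.
have := rho_inv (z (pt j)); lra.
Qed.

Lemma Ups_inG z t : (forall j, (j <= 2 ^ n)%N -> inG (z (pt j))) -> 0 <= t <= 1 ->
  inG (Ups n z t).
Proof.
move=> hz ht; have [j jN hj] := exists_j n _ ht.
rewrite (Ups_repr n z _ _ jN hj); apply: inG_mul; first exact: hz (ltnW jN).
apply: inG_dil; apply: inG_mul; [apply: inG_inv; exact: hz (ltnW jN) | exact: hz jN].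
Qed.

Lemma Ups_rho z M t : (forall j, (j <= 2 ^ n)%N -> rho (z (pt j)) <= M) -> 0 <= t <= 1 ->
  rho (Ups n z t) <= 14 * M.
Proof.
move=> hz ht; have [j jN hj] := exists_j n _ ht.
rewrite (Ups_repr n z _ _ jN hj).
have h1 := hz j (ltnW jN); have h2 := V_rho _ _ _ hz jN.
have h3 := dil_rho_le _ (Vz z j) (lam_in n _ _ hj).
apply: le_trans (rho_mul _ _) _; lra.
Qed.


Local Notation ee x y j := (gmul (ginv (x (pt j))) (y (pt j))).

Lemma Vy_rho x y M j : (forall j, (j <= 2 ^ n)%N -> rho (x (pt j)) <= M) ->
  (forall j, (j <= 2 ^ n)%N -> rho (ee x y j) <= 1) ->
  (j < 2 ^ n)%N -> rho (Vz y j) <= 8 + 24 * M.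
Proof.
move=> hx he jN; rewrite /incr (ident_Vy (x (pt j)) (x (pt j.+1))).
have h1 := he j (ltnW jN); have h2 := he j.+1 jN.
have h3 := V_rho _ _ _ hx jN; rewrite /incr in h3.
have h4 := rho_inv (ee x y j).
have h5 := rho_mul (gmul (ginv (x (pt j))) (x (pt j.+1))) (ee x y j.+1).
apply: le_trans (rho_mul _ _) _; lra.
Qed.

Lemma D_bound x y M (τ : R) t : 0 <= τ <= 1 -> 0 <= M ->
  (forall j, (j <= 2 ^ n)%N -> rho (x (pt j)) <= M) ->
  (forall j, (j <= 2 ^ n)%N -> rho (ee x y j) <= τ ^+ 4) -> 0 <= t <= 1 ->
  rho (gmul (ginv (Ups n x t)) (Ups n y t)) <= τ ^+ 2 * (16 + 144 * M).
Proof.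
move=> ht0 M0 hx he ht; have [j jN hj] := exists_j n _ ht.
rewrite (Ups_repr n x _ _ jN hj) (Ups_repr n y _ _ jN hj) /incr D_ident.
have l01 := lam_in n _ _ hj.
move: (NR * t - j%:R) l01 => l l01.
have hv := V_rho _ _ _ hx jN; rewrite /incr in hv.
have hea := he j (ltnW jN); have heb := he j.+1 jN.
move: hv hea heb.
move: (gmul (ginv (x (pt j))) (x (pt j.+1))) (ee x y j) (ee x y j.+1) => v ea eb hv hea heb.
apply: le_trans (rho_mul _ _) _.
have c1 := rho_conj (dil l v) (gmul ea (ginv (dil l ea))).
have rf : rho (gmul ea (ginv (dil l ea))) <= 6 * τ ^+ 4.
  apply: le_trans (rho_mul _ _) _.
  have := rho_inv (dil l ea); have := dil_rho_le _ ea l01; lra.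
have rdv : rho (dil l v) <= 6 * M by apply: le_trans (dil_rho_le _ _ l01) hv.
have sq := sqrt_small (τ ^+ 2) (rho (gmul ea (ginv (dil l ea)))) (rho (dil l v)) 6 (6 * M)
  ltac:(exact: sqr_ge0) ltac:(lra) (rho_ge0 _) ltac:(by rewrite -exprM mulrC) (rho_ge0 _) rdv.
have reb : rho (dil l eb) <= τ ^+ 4 by apply: le_trans (dil_rho_le _ _ l01) heb.
have A := arith_D _ _ _ _ _ ht0 M0 rf sq reb.
lra.
Qed.


Lemma q_large x y M (τ : R) s t : 0 <= τ <= 1 -> 0 <= M ->
  (forall j, (j <= 2 ^ n)%N -> rho (x (pt j)) <= M) ->
  (forall j, (j <= 2 ^ n)%N -> rho (ee x y j) <= τ ^+ 4) ->
  0 <= s <= 1 -> 0 <= t <= 1 ->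
  rho (gmul (ginv (incr (Ups n x) s t)) (incr (Ups n y) s t)) <=
    τ * (2 * (3 * (16 + 144 * M) + 1 + 336 * (16 + 144 * M) * M)).
Proof.
move=> ht0 M0 hx he hs ht.
have hDs := D_bound _ _ _ _ _ ht0 M0 hx he hs.
have hDt := D_bound _ _ _ _ _ ht0 M0 hx he ht.
have hXs := Ups_rho _ _ _ hx hs; have hXt := Ups_rho _ _ _ hx ht.
rewrite /incr q_ident.
move: hDs hDt hXs hXt.
move: (Ups n x s) (Ups n x t) (Ups n y s) (Ups n y t) => Xs Xt Ys Yt hDs hDt hXs hXt.
have AD0 : 0 <= 16 + 144 * M by lra.
move: AD0 hDs hDt; move: (16 + 144 * M) => AD AD0 hDs hDt.
have hh : rho (gmul (ginv Xs) Xt) <= 84 * M.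
  apply: le_trans (rho_mul _ _) _; have := rho_inv Xs; lra.
have hiD : rho (ginv (gmul (ginv Xs) Ys)) <= τ ^+ 2 * (2 * AD).
  apply: le_trans (rho_inv _) _; lra.
have sq := sqrt_small τ _ _ (2 * AD) (84 * M) ltac:(case/andP: ht0 => //) ltac:(lra)
   (rho_ge0 _) hiD (rho_ge0 _) hh.
have c1 := rho_conj (gmul (ginv Xs) Xt) (ginv (gmul (ginv Xs) Ys)).
have A := arith_q _ _ _ _ _ _ ht0 AD0 hDs sq hDt.
apply: le_trans (rho_mul _ _) _.
have := rho_inv (gmul (ginv Xs) Ys).
lra.
Qed.

Lemma q_small x y M s t : 0 <= M ->
  (forall j, (j <= 2 ^ n)%N -> rho (x (pt j)) <= M) ->
  (forall j, (j <= 2 ^ n)%N -> rho (ee x y j) <= 1) ->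
  0 <= s -> s <= t -> t <= 1 -> t - s <= NR^-1 ->
  rho (gmul (ginv (incr (Ups n x) s t)) (incr (Ups n y) s t)) <=
    6 * (12 * (8 + 24 * M) * Num.sqrt NR) * Num.sqrt (t - s).
Proof.
move=> M0 hx he s0 st t1 tsN.
have V0 : 0 <= 8 + 24 * M by lra.
have hVx : forall j, (j < 2 ^ n)%N -> rho (Vz x j) <= 8 + 24 * M.
  by move=> j jN; have := V_rho _ _ _ hx jN; lra.
have hVy : forall j, (j < 2 ^ n)%N -> rho (Vz y j) <= 8 + 24 * M.
  by move=> j jN; apply: (Vy_rho _ _ _ _ hx he jN).
have hX := Ups_holder n x _ _ _ hVx V0 s0 st t1 tsN.
have hY := Ups_holder n y _ _ _ hVy V0 s0 st t1 tsN.
move: hX hY; rewrite -!mulrA.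
move: (Num.sqrt NR * Num.sqrt (t - s)) => S hX hY.
apply: le_trans (rho_mul _ _) _.
have := rho_inv (incr (Ups n x) s t).
have : 6 * (12 * ((8 + 24 * M) * S)) = 72 * ((8 + 24 * M) * S) by ring.
lra.
Qed.

End Paths.


Lemma lim_extract (R: realType) (f : R -> R) (c : R) : f x @[x --> 0^'+] --> 0 -> 0 < c ->
  exists2 e : R, 0 < e & forall h, 0 < h < e -> `|f h| < c.
Proof.
move=> H c0.
have := @cvgr_dist_lt R R^o _ _ _ f 0 H c c0.
move=> [e /= e0 He].
exists e => // h /andP[h0 he].
have := He h; rewrite /ball /= sub0r normrN ger0_norm ?ltW // => /(_ he h0).
by rewrite sub0r normrN.
Qed.

Lemma fin_arith (R : realType) (X c eps S ph : R) : 0 <= X -> 0 < eps -> 0 < ph -> 0 <= S ->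
  c * (2 * (X + 1)) = eps -> S <= c * ph -> X * S <= eps / 2 * ph.
Proof.
move=> X0 e0 p0 S0 E Sc.
have c0 : 0 <= c.
  case: (ltP c 0) => // cn; have : c * (2 * (X + 1)) < 0 by nra.
  lra.
have cp : 0 <= c * ph by apply: mulr_ge0 => //; lra.
have h1 : X * S <= X * (c * ph) by apply: ler_wpM2l.
have h2 : X * (c * ph) <= (X + 1) * (c * ph) by nra.
have h3 : (X + 1) * (c * ph) * 2 = eps * ph by rewrite -E; ring.
have h4 : eps / 2 * ph = eps * ph / 2 by ring.
rewrite h4; lra.
Qed.

Lemma rho_gone (R : realType) (d : nat) : rho (@gone R d) = 0.
Proof. by rewrite /rho /= !nm0 sqrtr0 addr0. Qed.


Theorem mainTheorem20 (R : realType) (d : nat) (p : R) (phi : R -> R) :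
  (2 <= d)%N -> 2 < p < 3 -> Xi p phi ->
  (fun x => Num.sqrt x / phi x) x @[x --> 0^'+] --> 0 ->
  forall n : nat, forall x : R -> T2 R d, C0path x ->
  forall eps : R, 0 < eps -> exists2 del : R, 0 < del &
    forall y : R -> T2 R d, C0path y -> (dinf x y < del%:E)%E ->
      (dphi phi (Ups n x) (Ups n y) < eps%:E)%E.
Proof.
move=> d2 /andP[p2 p3] [phi0 [phige0 [phiinc _]]] Hlim n x [_ [x0 xG]] eps eps0.
have pn0 : p != 0 by rewrite gt_eqF //; lra.
have pge0 : 0 <= p by lra.
have phi_pos : forall h, 0 < h <= 1 -> 0 < phi h.
  move=> h /andP[h0 h1].
  have := phiinc 0 h ltac:(by rewrite lexx ler01) ltac:(by rewrite ltW // h1) h0.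
  rewrite phi0 powR0 // => H.
  rewrite lt_neqAle phige0 ?andbT; last by rewrite ltW.
  apply/eqP => E; rewrite -E powR0 // in H; by rewrite ltxx in H.
have phi_mono : forall a b, 0 <= a -> a <= b -> b <= 1 -> phi a <= phi b.
  move=> a b a0 ab b1; case: (eqVneq a b) => [-> //|nab].
  have ab' : a < b by rewrite lt_neqAle nab.
  have := phiinc a b ltac:(by rewrite a0 (le_trans ab b1)) ltac:(by rewrite (le_trans a0 ab) b1) ab'.
  move=> H; rewrite leNgt; apply/negP => ba.
  have := @ge0_ler_powR R p pge0 (phi b) (phi a).
  rewrite !nnegrE phige0 ?phige0 ?(le_trans a0 ab) ?b1 ?a0 ?(le_trans ab b1) //.
  move=> /(_ isT isT (ltW ba)); rewrite leNgt H //.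
pose NR : R := 2%:R ^+ n.
have NR0 : 0 < NR by rewrite exprn_gt0 // ltr0n.
have NR1 : 1 <= NR by rewrite /NR exprn_ege1 // ler1n.
pose M := \sum_(j < (2 ^ n).+1) rho (x (pt n j)).
have hx : forall j, (j <= 2 ^ n)%N -> rho (x (pt n j)) <= M.
  move=> j jN; have jN' : (j < (2 ^ n).+1)%N by [].
  rewrite /M (bigD1 (Ordinal jN')) //= lerDl; apply: sumr_ge0 => i _; exact: rho_ge0.
have M0 : 0 <= M by apply: sumr_ge0 => i _; exact: rho_ge0.
have xGj : forall j, (j <= 2 ^ n)%N -> inG (x (pt n j)).
  by move=> j jN; apply: xG; rewrite pt_ge0 pt_le1.
pose H := 12 * (8 + 24 * M) * Num.sqrt NR.
have H0 : 0 <= H by rewrite /H !mulr_ge0 ?sqrtr_ge0 //; lra.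
pose AD := 16 + 144 * M.
pose B := 2 * (3 * AD + 1 + 336 * AD * M).
have B0 : 0 <= B by rewrite /B /AD; nra.
pose K := @Kc R d.
have K0 : 0 <= K by apply: Kc_ge0.
pose c0 := eps / (2 * (K * (6 * H) + 1)).
have X0 : 0 <= K * (6 * H) by rewrite mulr_ge0 // mulr_ge0.
have c00 : 0 < c0 by rewrite /c0 divr_gt0 //; lra.
have c0E : c0 * (2 * (K * (6 * H) + 1)) = eps by rewrite /c0 mulfVK //; lra.
have [η η0 Hη] := lim_extract _ _ _ Hlim c00.
pose η' := Num.min (η / 2) NR^-1.
have η'0 : 0 < η' by rewrite /η' lt_min divr_gt0 ?invr_gt0 //.
have η'η : η' < η by rewrite /η' gt_min; apply/orP; left; lra.
have η'N : η' <= NR^-1 by rewrite /η' ge_min lexx orbT.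
have Ni1 : NR^-1 <= 1 by rewrite invf_le1.
have η'1 : η' <= 1 by apply: le_trans η'N Ni1.
pose phη := phi η'.
have phη0 : 0 < phη by apply: phi_pos; rewrite η'0 η'1.
pose c1 := eps / (2 * (K * B + 1)).
have c1E : c1 * (2 * (K * B + 1)) = eps by rewrite /c1 mulfVK //; nra.
have c10 : 0 < c1 by rewrite /c1 divr_gt0 //; nra.
pose τ := Num.min 1 (c1 * phη).
have τ0 : 0 < τ by rewrite /τ lt_min ltr01 mulr_gt0.
have τ1 : τ <= 1 by rewrite /τ ge_min lexx.
have τc : τ <= c1 * phη by rewrite /τ ge_min lexx orbT.
have D0 := @Dc_gt0 R d.
exists (τ ^+ 4 / (2 * @Dc R d)).
  by rewrite divr_gt0 ?exprn_gt0 // mulr_gt0.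
move=> y [_ [y0 yG]] Hd.
have he : forall j, (j <= 2 ^ n)%N ->
    rho (gmul (ginv (x (pt n j))) (y (pt n j))) <= τ ^+ 4.
  move=> j jN.
  have yGj : inG (y (pt n j)) by apply: yG; rewrite pt_ge0 pt_le1.
  have eG : inG (gmul (ginv (x (pt n j))) (y (pt n j))).
    by apply: inG_mul => //; apply: inG_inv; apply: xGj.
  case: j jN yGj eG => [|j] jN yGj eG.
    by rewrite pt0 x0 y0 ginv1 gmul1g rho_gone; apply: exprn_ge0; apply: ltW.
  have ptpos : 0 < @pt R n j.+1 by apply: divr_gt0; [rewrite ltr0n | exact: NR0].
  have C : ((ccnorm (gmul (ginv (x (pt n j.+1))) (y (pt n j.+1))))%:E <= dinf x y)%E.
    apply: ereal_sup_ubound; exists 0, (pt n j.+1); split; first exact: lexx.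
    split; first exact: ptpos. split; first exact: pt_le1.
    by rewrite /incr x0 y0 ginv1 !gmul1g.
  have Cl : ccnorm (gmul (ginv (x (pt n j.+1))) (y (pt n j.+1))) < τ ^+ 4 / (2 * @Dc R d).
    by rewrite -lte_fin; apply: le_lt_trans C Hd.
  rewrite ltr_pdivlMr ?mulr_gt0 // in Cl.
  apply: le_trans (ccnorm_lower _ eG) _.
  by rewrite mulrC; apply: ltW.
have he1 : forall j, (j <= 2 ^ n)%N ->
    rho (gmul (ginv (x (pt n j))) (y (pt n j))) <= 1.
  move=> j jN; apply: le_trans (he j jN) _; apply: exprn_ile1; [exact: ltW | exact: τ1].
have yGj : forall j, (j <= 2 ^ n)%N -> inG (y (pt n j)).
  by move=> j jN; apply: yG; rewrite pt_ge0 pt_le1.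
have UxG : forall u, 0 <= u <= 1 -> inG (Ups n x u) := fun u hu => Ups_inG R d n x u xGj hu.
have UyG : forall u, 0 <= u <= 1 -> inG (Ups n y u) := fun u hu => Ups_inG R d n y u yGj hu.
apply: (@le_lt_trans _ _ (eps / 2)%:E); last first.
  by rewrite lte_fin ltr_pdivrMr // ltr_pMr // ltr1n.
apply: ge_ereal_sup => _ [s [t [s0 [st [t1 ->]]]]].
rewrite lee_fin.
have hs : 0 <= s <= 1 by rewrite s0 /= (le_trans (ltW st) t1).
have ht : 0 <= t <= 1 by rewrite t1 andbT (le_trans s0 (ltW st)).
have qG : inG (gmul (ginv (incr (Ups n x) s t)) (incr (Ups n y) s t)).
  apply: inG_mul; first apply: inG_inv; apply: inG_mul;
   (try apply: inG_inv); [exact: UxG | exact: UxG | exact: UyG | exact: UyG].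
have [_ Cq] := ccnorm_upper _ qG.
have ts0 : 0 < t - s by rewrite subr_gt0.
have ts1 : t - s <= 1 by rewrite lerBlDr (le_trans t1) // lerDl.
have ph : 0 < phi (t - s) by apply: phi_pos; rewrite ts0 ts1.
rewrite ler_pdivrMr //.
apply: le_trans Cq _.
case: (leP (t - s) η') => hts.
  have rq := q_small R d n x y M s t M0 hx he1 s0 (ltW st) t1 (le_trans hts η'N).
  have Hs := Hη (t - s) ltac:(by rewrite ts0 (le_lt_trans hts η'η)).
  have Sle : Num.sqrt (t - s) <= c0 * phi (t - s).
    rewrite ger0_norm ?divr_ge0 ?sqrtr_ge0 ?ltW // in Hs.
    by rewrite ltr_pdivrMr // in Hs; apply: ltW.
  have fin := fin_arith _ _ _ _ _ _ X0 eps0 ph (sqrtr_ge0 _) c0E Sle.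
  apply: le_trans (ler_wpM2l K0 rq) _.
  apply: le_trans _ fin; rewrite le_eqVlt; apply/orP; left; apply/eqP; rewrite /H /NR; ring.
have rq := q_large R d n x y M τ s t ltac:(by rewrite (ltW τ0) τ1) M0 hx he hs ht.
have fin := fin_arith _ _ _ _ _ _ (mulr_ge0 K0 B0) eps0 phη0 (ltW τ0) c1E τc.
have phm : phη <= phi (t - s) by apply: phi_mono; [exact: ltW | exact: ltW |].
apply: le_trans (ler_wpM2l K0 rq) _.
apply: le_trans (_ : K * B * τ <= _).
  rewrite le_eqVlt; apply/orP; left; apply/eqP; rewrite /B /AD; ring.
apply: le_trans fin _.
by apply: ler_wpM2l => //; rewrite divr_ge0 // ltW.
Qed.
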